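(* Let $S\subseteq\{0,1\}^n$, $f\in[0,1/2]$, $m>0$, $T>0$ integers, and let $h_m^1,\dots,h_m^T$ be hash functions sampled independently from $\mathcal{H}^f_{m\times n}$. Let $Y_k=\mathbb{I}[S(h_m^k)\ge1]$, $Y=\sum_{k=1}^T Y_k$, and $\Pr_{\mathrm{est}}[S(h)\ge1]=Y/T$. Let $\kappa>0$ and $c>0$. Define the random variable $\mathcal{B}$ to equal $\frac{2^m c}{1+\kappa}$ if $\Pr_{\mathrm{est}}[S(h)\ge1]\ge c$, and $0$ otherwise. Then $$\Pr\left[|S|\ge\mathcal{B}\right]\ge 1-\exp\left(-\frac{\kappa^2cT}{(1+\kappa)(2+\kappa)}\right).$$
   Context: For integers $1\le m\le n$ and $f\in[0,1/2]$, sampling $h$ from $\mathcal{H}^f_{m\times n}$ means $h(x)=Ax+b\bmod 2$ with $A\in\{0,1\}^{m\times n}$ having i.i.d. entries with $\Pr[A_{ij}=1]=f$ and $b\in\{0,1\}^m$ uniform and independent of $A$. For $S\subseteq\{0,1\}^n$, $S(h)=|\{x\in S:h(x)=0\}|$. *)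

(* Defs.v *)
From HB Require Import structures.
From mathcomp Require Import all_boot all_order all_algebra.
From mathcomp Require Import reals.
From mathcomp Require Import sequences exp.
Set Implicit Arguments. Unset Strict Implicit. Unset Printing Implicit Defensive.
Import Order.TTheory GRing.Theory Num.Theory.
Local Open Scope ring_scope.

Notation vec n := 'cV['F_2]_n.

(* A hash function h(x) = A x + b mod 2 is given by the pair (A, b). *)
Definition hashT (m n : nat) : finType :=
  ('M['F_2]_(m, n) * 'cV['F_2]_m)%type.

Definition hash_apply (m n : nat) (h : hashT m n) (x : vec n) : vec m :=
  h.1 *m x + h.2.

Definition Sh (m n : nat) (S : {set vec n}) (h : hashT m n) : nat :=
  #|[set x in S | hash_apply h x == 0]|.

(* Probability mass of h = (A,b) under H^f_{m x n}: entries of A i.i.d.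
   Bernoulli(f), b uniform and independent of A. *)
Definition hash_weight (R : realType) (f : R) (m n : nat) (h : hashT m n) : R :=
  (\prod_(i < m) \prod_(j < n) (if h.1 i j == 1 then f else 1 - f))
  / (2 ^+ m).

Definition sampleT (m n T : nat) : finType := {ffun 'I_T -> hashT m n}.

Definition sample_weight (R : realType) (f : R) (m n T : nat)
  (w : sampleT m n T) : R :=
  \prod_(k < T) hash_weight f (w k).

Definition PrT (R : realType) (f : R) (m n T : nat) (E : pred (sampleT m n T)) : R :=
  \sum_(w : sampleT m n T | E w) sample_weight f w.

Definition Ycount (m n T : nat) (S : {set vec n}) (w : sampleT m n T) : nat :=
  \sum_(k < T) (0 < Sh S (w k))%N.

Definition Pr_est (R : realType) (m n T : nat) (S : {set vec n})
  (w : sampleT m n T) : R :=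
  (Ycount S w)%:R / T%:R.

Definition Bvar (R : realType) (m n T : nat) (S : {set vec n}) (kappa c : R)
  (w : sampleT m n T) : R :=
  if c <= Pr_est R S w then 2 ^+ m * c / (1 + kappa) else 0.

(* Main.v *)
Require Import Defs.
From HB Require Import structures.
From mathcomp Require Import all_boot all_order all_algebra.
From mathcomp Require Import reals classical_sets boolp functions.
From mathcomp Require Import topology normedtype sequences derive exp.
From mathcomp Require Import ring lra.
Import Order.TTheory GRing.Theory Num.Theory.
Import numFieldNormedType.Exports.
Local Open Scope ring_scope.

Lemma psi_ge0 (R : realType) (y : R) : 0 <= y ->
  (1 - y) * (expR y * expR y) <= 1 + y.
Proof.
move=> y0; rewrite le_eqVlt eq_sym in y0; case/orP: y0 => [/eqP->|y0].
  by rewrite expR0 !mulr1 subr0 addr0.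
pose g : R -> R := expR * expR.
pose f : R -> R := (cst 1 + id) - (cst 1 - id) * g.
pose df : R -> R := fun t => 1 + expR t * expR t - 2 * (1 - t) * (expR t * expR t).
have D (t : R) : is_derive t 1 f (df t).
  rewrite /f /df /g.
  apply: is_derive_eq.
  rewrite /= !fctE /cst /= .
  have sE : forall a b : R, a *: b = a * b by [].
  rewrite !sE.
  ring.
have dv (t : R) : derivable f t 1 by case: (D t).
have [c cI Hc] := MVT y0 (fun t _ => D t) (derivable_within_continuous (fun t _ => dv t)).
have : 0 <= f y - f 0.
  rewrite Hc subr0 mulr_ge0 // ?(ltW y0) // /df.
  have e2 : expR c * expR c * expR (- (2 * c)) = 1.
    by rewrite -!expRD (_ : c + c + - (2 * c) = 0) ?expR0 //; ring.
  have h1 := expR_ge1Dx (- (2 * c)).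
  have h2 := expR_gt0 c.
  set E := expR c * expR c in e2 *.
  set F := expR (- (2 * c)) in e2 h1 *.
  have E0 : 0 < E by rewrite mulr_gt0.
  nra.
rewrite /f /g /= !fctE /cst /= expR0; lra.
Qed.

Section Comb.
Variables (R : realType) (f : R).
Hypotheses (f0 : 0 <= f) (f1 : f <= 1).

Definition ew (a : 'F_2) : R := if a == 1 then f else 1 - f.

Lemma ew_ge0 a : 0 <= ew a.
Proof. by rewrite /ew; case: ifP => _ //; rewrite subr_ge0. Qed.

Lemma sum_ew : \sum_(a : 'F_2) ew a = 1.
Proof.
rewrite (bigD1 1) //= /ew eqxx.
rewrite (eq_bigr (fun _ => 1 - f)) => [|a /negbTE ->//].
rewrite sumr_const.
have -> : #|[pred i : 'F_2 | i != 1]| = 1%N.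
  by rewrite cardC1 card_Fp.
by rewrite mulr1n addrC subrK.
Qed.

Lemma sumQ (m n : nat) :
  \sum_(A : 'M['F_2]_(m, n)) \prod_(i < m) \prod_(j < n) ew (A i j) = 1.
Proof.
rewrite (reindex (fun g : {ffun 'I_m -> {ffun 'I_n -> 'F_2}} => \matrix_(i, j) g i j)); last first.
  exists (fun A : 'M['F_2]_(m, n) => [ffun i => [ffun j => A i j]]).
    by move=> g _; apply/ffunP => i; apply/ffunP => j; rewrite !ffunE mxE.
  by move=> A _; apply/matrixP => i j; rewrite mxE !ffunE.
under eq_bigr do under eq_bigr do under eq_bigr do rewrite mxE.
rewrite -(bigA_distr_bigA (fun (i : 'I_m) (r : {ffun 'I_n -> 'F_2}) => \prod_(j < n) ew (r j))).
apply: big1 => i _.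
rewrite -(bigA_distr_bigA (fun (j : 'I_n) (a : 'F_2) => ew a)).
by apply: big1 => j _; exact: sum_ew.
Qed.


Lemma hw_ge0 m n (h : hashT m n) : 0 <= hash_weight f h.
Proof.
rewrite /hash_weight divr_ge0 ?exprn_ge0 //.
by apply: prodr_ge0 => i _; apply: prodr_ge0 => j _; exact: ew_ge0.
Qed.

Lemma sum_hw m n : \sum_(h : hashT m n) hash_weight f h = 1.
Proof.
rewrite /hashT -(pair_bigA _ (fun A b => hash_weight f (A, b))) /=.
rewrite /hash_weight /=.
under eq_bigr do rewrite sumr_const card_mx card_Fp // muln1.
have H2 (x : R) : x / 2 ^+ m *+ 2 ^ m = x.
  by rewrite -mulr_natr natrX mulfVK // expf_neq0 // pnatr_eq0.
under eq_bigr do rewrite H2.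
exact: sumQ.
Qed.

Lemma sum_hw_x m n (x : vec n) :
  \sum_(h : hashT m n) hash_weight f h * ((hash_apply h x == 0)%:R : R) = (2 ^+ m)^-1.
Proof.
rewrite /hashT -(pair_bigA _ (fun A b => hash_weight f (A, b) * ((hash_apply (A, b) x == 0)%:R : R))) /=.
have -> : (2 ^+ m : R)^-1 = \sum_(A : 'M['F_2]_(m, n)) \prod_(i < m) \prod_(j < n) ew (A i j) / 2 ^+ m.
  by rewrite -mulr_suml sumQ mul1r.
apply: eq_bigr => A _.
rewrite (bigD1 (- (A *m x))) //= /hash_apply /= addrN eqxx mulr1 big1 ?addr0 //.
move=> b hb; rewrite (_ : (A *m x + b == 0) = false) ?mulr0 //.
by apply/negbTE; rewrite addrC addr_eq0.
Qed.

Lemma Sh_sum m n (S : {set vec n}) (h : hashT m n) :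
  ((Sh S h)%:R : R) = \sum_(x in S) ((hash_apply h x == 0)%:R : R).
Proof.
rewrite /Sh -sum1_card natr_sum big_mkcond /= [RHS]big_mkcond /=.
apply: eq_bigr => x _; rewrite inE.
by case: (x \in S); case: (hash_apply h x == 0).
Qed.

Lemma sum_hw_pos m n (S : {set vec n}) :
  \sum_(h : hashT m n) hash_weight f h * (((0 < Sh S h)%N)%:R : R) <= #|S|%:R / 2 ^+ m.
Proof.
apply: (@le_trans _ _ (\sum_(h : hashT m n) hash_weight f h * (Sh S h)%:R)).
  apply: ler_sum => h _; apply: ler_wpM2l; first exact: hw_ge0.
  by rewrite ler_nat; case: (Sh S h).
under eq_bigr do rewrite Sh_sum mulr_sumr.
rewrite exchange_big /=.
under eq_bigr do rewrite sum_hw_x.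
by rewrite sumr_const mulr_natl.
Qed.

End Comb.

Lemma key_exp (R : realType) (k : R) : 0 <= k -> expR (2 * k / (2 + k)) <= 1 + k.
Proof.
move=> k0.
have k2 : 0 < 2 + k by lra.
set y := k / (2 + k).
have y0 : 0 <= y by rewrite divr_ge0 // ltW.
have H := @psi_ge0 R y y0.
have -> : 2 * k / (2 + k) = y + y by rewrite /y; field; lra.
rewrite expRD.
have e1 : 1 - y = 2 / (2 + k) by rewrite /y; field; lra.
have e2 : 1 + y = 2 / (2 + k) * (1 + k) by rewrite /y; field; lra.
rewrite e1 e2 in H.
by rewrite -(ler_pM2l (_ : 0 < 2 / (2 + k))) // divr_gt0.
Qed.

Lemma sum_sw (R : realType) (f : R) m n T (g : hashT m n -> R) :
  \sum_(w : sampleT m n T) sample_weight f w * \prod_(k < T) g (w k)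
  = (\sum_(h : hashT m n) hash_weight f h * g h) ^+ T.
Proof.
rewrite -[in RHS](card_ord T) -prodr_const bigA_distr_bigA.
by apply: eq_bigr => w _; rewrite /sample_weight -big_split.
Qed.

Theorem theorem3 (R : realType) (n m T : nat) (S : {set 'cV['F_2]_n})
  (f kappa c : R) :
  (0 < m)%N -> (m <= n)%N -> (0 < T)%N ->
  0 <= f -> f <= 1 / 2 -> 0 < kappa -> 0 < c ->
  PrT f (fun w : sampleT m n T => Bvar S kappa c w <= (#|S|)%:R)
  >= 1 - expR (- (kappa ^+ 2 * c * T%:R / ((1 + kappa) * (2 + kappa)))).
Proof.
move=> m0 mn T0 f0 f12 k0 c0.
have f1 : f <= 1 by lra.
have sw0 (w : sampleT m n T) : 0 <= sample_weight f w.
  by apply: prodr_ge0 => k _; exact: hw_ge0.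
have sw1 : \sum_(w : sampleT m n T) sample_weight f w = 1.
  have := @sum_sw R f m n T (fun _ => 1).
  under eq_bigr do rewrite prodr_const expr1n mulr1.
  by under [X in _ = X ^+ _ -> _]eq_bigr do rewrite mulr1; rewrite sum_hw // expr1n.
have ex0 := expR_gt0 (- (kappa ^+ 2 * c * T%:R / ((1 + kappa) * (2 + kappa)))).
have [big|small] := lerP (2 ^+ m * c / (1 + kappa)) (#|S|%:R : R).
  rewrite /PrT (eq_bigl (fun _ => true)).
    by rewrite sw1; lra.
  by move=> w /=; rewrite /Bvar; case: ifP => _; [rewrite big | rewrite ler0n].
pose good := (fun w : sampleT m n T => Bvar S kappa c w <= (#|S|)%:R).
pose q := 2 * kappa / (2 + kappa).
pose E := expR (c * T%:R * q).
have E0 : 0 < E := expR_gt0 _.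
pose b := (fun h : hashT m n => (0 < Sh S h)%N).
pose p := \sum_(h : hashT m n) hash_weight f h * ((b h)%:R : R).
have p0 : 0 <= p.
  by apply: sumr_ge0 => h _; rewrite mulr_ge0 ?ler0n ?hw_ge0.
have k1 : 0 < 1 + kappa by lra.
have pc : p <= c / (1 + kappa).
  apply: le_trans (@sum_hw_pos R f f0 f1 m n S) _.
  have e : 2 ^+ m * c / (1 + kappa) = c / (1 + kappa) * 2 ^+ m by ring.
  rewrite e in small.
  by rewrite ler_pdivrMr ?exprn_gt0 // ltW.
have step1 : PrT f good = 1 - \sum_(w : sampleT m n T | ~~ good w) sample_weight f w.
  by rewrite -sw1 (bigID good) /= addrK.
have step2 : \sum_(w : sampleT m n T | ~~ good w) sample_weight f w <=
    \sum_(w : sampleT m n T) sample_weight f w * (1 + kappa) ^+ Ycount S w / E.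
  apply: (@le_trans _ _ (\sum_(w : sampleT m n T | ~~ good w) sample_weight f w * (1 + kappa) ^+ Ycount S w / E)).
    apply: ler_sum => w hw.
    rewrite -mulrA ler_peMr // ler_pdivlMr // mul1r.
    have cY : c * T%:R <= (Ycount S w)%:R.
      move: hw; rewrite /good /Bvar; case: ifP => [|_]; last by rewrite ler0n.
      by rewrite /Pr_est ler_pdivlMr // ltr0n.
    apply: (@le_trans _ _ (expR q ^+ Ycount S w)).
      rewrite -expRM_natl ler_expR ler_wpM2r // /q divr_ge0 //; lra.
    apply: lerXn2r; rewrite ?nnegrE ?expR_ge0 //; first lra.
    by apply: key_exp; lra.
  rewrite [X in _ <= X](bigID good) /= lerDr.
  apply: sumr_ge0 => w _; rewrite divr_ge0 ?mulr_ge0 ?exprn_ge0 ?(ltW E0) //; lra.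
have step3 : \sum_(w : sampleT m n T) sample_weight f w * (1 + kappa) ^+ Ycount S w / E
    = (1 + kappa * p) ^+ T / E.
  rewrite -mulr_suml.
  under eq_bigr do rewrite /Ycount expr_sum.
  rewrite (@sum_sw R f m n T (fun h => (1 + kappa) ^+ b h)).
  rewrite (_ : \sum_(h : hashT m n) hash_weight f h * (1 + kappa) ^+ b h = 1 + kappa * p) //.
  rewrite (eq_bigr (fun h => hash_weight f h + kappa * (hash_weight f h * (b h)%:R)));
    last first.
    move=> h _; rewrite /b; case: (0 < Sh S h)%N => /=.
      by rewrite expr1 mulr1n; ring.
    by rewrite expr0 mulr0n; ring.
  by rewrite big_split /= (@sum_hw R f m n) -mulr_sumr.
have step4 : (1 + kappa * p) ^+ T <= expR (T%:R * (kappa * (c / (1 + kappa)))).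
  apply: (@le_trans _ _ (expR (kappa * p) ^+ T)).
    apply: lerXn2r; rewrite ?nnegrE ?expR_ge0 ?expR_ge1Dx //.
    by rewrite addr_ge0 // mulr_ge0 // ltW.
  by rewrite -expRM_natl ler_expR ler_wpM2l ?ler0n // ler_wpM2l ?(ltW k0).
have step5 : expR (T%:R * (kappa * (c / (1 + kappa)))) / E
    = expR (- (kappa ^+ 2 * c * T%:R / ((1 + kappa) * (2 + kappa)))).
  rewrite /E -expRB; congr expR; rewrite /q; field; lra.
have : (1 + kappa * p) ^+ T / E <= expR (- (kappa ^+ 2 * c * T%:R / ((1 + kappa) * (2 + kappa)))).
  by rewrite -step5 ler_pM2r ?invr_gt0.
rewrite /PrT in step1; rewrite /PrT step1.
move: step2; rewrite step3; lra.
Qed.
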